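(* Let $\mathcal{C}$ be a d-category. For every $\mathcal{C}$-language $L$ there exists a $\mathcal{C}$-automaton $X$ with $\mathrm{Lang}(X)=L$. (Conversely, $\mathrm{Lang}(X)$ is a $\mathcal{C}$-language for every $\mathcal{C}$-automaton $X$.)
   Context: A d-category is a small category $\mathcal{C}$ with wide subcategories $\mathcal{C}^+$ (formorphisms) and $\mathcal{C}^-$ (backmorphisms) such that an invertible $\varphi$ is in $\mathcal{C}^+$ iff $\varphi^{-1}\in\mathcal{C}^-$. A $\mathcal{C}$-automaton is a presheaf $X:\mathcal{C}^{op}\to\mathbf{Set}$ with sets of start and accept elements (elements are pairs $(U,x)$, $x\in X[U]$); morphisms of automata are presheaf maps preserving start and accept elements. A linear category is a bipointed d-category isomorphic to a finite (possibly empty) concatenation (gluing $\top$ to $\bot$) of $\mathbf S$ (formorphism $\bot\to\top$), $\mathbf T$ (backmorphism $\top\to\bot$), $\mathbf I$ (inverse pair); a path is a d-functor $\omega:\mathcal I\to\mathcal{C}$ from one; its track object is $\operatorname{colim}_i\mathcal{C}(-,\omega(i))$ with single start element the image of $\mathrm{id}_{\omega(\bot)}$ and single accept element the image of $\mathrm{id}_{\omega(\top)}$; a track object is an automaton isomorphic to such. For track objects, $\Delta\sqsubseteq\Gamma$ if there is a morphism of automata $\Delta\to\Gamma$. A $\mathcal{C}$-language is a class $L$ of track objects that is down-closed: $\Gamma\in L$ and $\Delta\sqsubseteq\Gamma$ imply $\Delta\in L$. $\mathrm{Lang}(X)$ is the class of track objects $\Gamma$ admitting a morphism of automata $\Gamma\to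 X$. *)

(* Defs.v *)
From Stdlib Require Import ProofIrrelevance Lia List Arith.

Record dcat := DCat {
  Ob : Type;
  Hom : Ob -> Ob -> Type;
  idm : forall a, Hom a a;
  comp : forall a b c, Hom b c -> Hom a b -> Hom a c;
  comp_idl : forall a b (f : Hom a b), comp _ _ _ (idm b) f = f;
  comp_idr : forall a b (f : Hom a b), comp _ _ _ f (idm a) = f;
  comp_assoc : forall a b c d (f : Hom a b) (g : Hom b c) (h : Hom c d),
      comp _ _ _ h (comp _ _ _ g f) = comp _ _ _ (comp _ _ _ h g) f;
  fore : forall a b, Hom a b -> Prop;
  back : forall a b, Hom a b -> Prop;
  fore_id : forall a, fore _ _ (idm a);
  fore_comp : forall a b c (f : Hom a b) (g : Hom b c),
      fore _ _ f -> fore _ _ g -> fore _ _ (comp _ _ _ g f);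
  back_id : forall a, back _ _ (idm a);
  back_comp : forall a b c (f : Hom a b) (g : Hom b c),
      back _ _ f -> back _ _ g -> back _ _ (comp _ _ _ g f);
  inv_dir : forall a b (f : Hom a b) (g : Hom b a),
      comp _ _ _ g f = idm a -> comp _ _ _ f g = idm b -> (fore _ _ f <-> back _ _ g)
}.
Arguments Hom {d0} _ _.
Arguments idm {d0} _.
Arguments comp {d0 a b c} _ _.
Arguments fore {d0 a b} _.
Arguments back {d0 a b} _.

Record dfunctor (D C : dcat) := DFun {
  fob : Ob D -> Ob C;
  fhom : forall a b, @Hom D a b -> @Hom C (fob a) (fob b);
  fhom_id : forall a, fhom _ _ (idm a) = idm (fob a);
  fhom_comp : forall a b c (f : @Hom D a b) (g : @Hom D b c),
      fhom _ _ (comp g f) = comp (fhom _ _ g) (fhom _ _ f);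
  fhom_fore : forall a b (f : @Hom D a b), fore f -> fore (fhom _ _ f);
  fhom_back : forall a b (f : @Hom D a b), back f -> back (fhom _ _ f)
}.
Arguments fob {D C} _ _.
Arguments fhom {D C} _ {a b} _.

(* S : formorphism bot -> top ; T : backmorphism top -> bot ;
   I : inverse pair (formorphism bot -> top, backmorphism top -> bot). *)
Inductive letter := LS | LT | LI.
Definition fwd (l : letter) : Prop := match l with LT => False | _ => True end.
Definition bwd (l : letter) : Prop := match l with LS => False | _ => True end.

(* The concatenation of the word w: objects 0..length w (the glued endpoints);
   it is a thin category: there is a (unique) morphism i -> j iff every segment
   between i and j can be traversed in the direction from i to j. *)
Definition LOb (w : list letter) := {i : nat | i <= length w}.
Definition LHom (w : list letter) (i j : LOb w) : Prop :=
  forall k, (proj1_sig i <= k < proj1_sig j -> fwd (nth k w LI)) /\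
            (proj1_sig j <= k < proj1_sig i -> bwd (nth k w LI)).

Lemma LHom_id w (i : LOb w) : LHom w i i.
Proof. intro k; split; intro; lia. Qed.

Lemma LHom_comp w (i j k : LOb w) : LHom w j k -> LHom w i j -> LHom w i k.
Proof.
  destruct i as [i Hi], j as [j Hj], k as [k Hk]; unfold LHom; simpl.
  intros G F m; split; intro Hm.
  - destruct (Nat.lt_ge_cases m j).
    + apply (proj1 (F m)); lia.
    + apply (proj1 (G m)); lia.
  - destruct (Nat.lt_ge_cases m j).
    + apply (proj2 (G m)); lia.
    + apply (proj2 (F m)); lia.
Qed.

Definition Lin (w : list letter) : dcat.
Proof.
  refine (@DCat (LOb w) (@LHom w) (@LHom_id w)
            (fun a b c g f => @LHom_comp w a b c g f)
            _ _ _
            (fun a b _ => proj1_sig a <= proj1_sig b)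
            (fun a b _ => proj1_sig b <= proj1_sig a)
            _ _ _ _ _);
  intros; try apply proof_irrelevance; simpl in *; try lia; tauto.
Defined.

Definition lbot (w : list letter) : Ob (Lin w) :=
  exist (fun i => i <= length w) 0 (Nat.le_0_l _).
Definition ltop (w : list letter) : Ob (Lin w) :=
  exist (fun i => i <= length w) (length w) (le_n _).

Definition path (C : dcat) (w : list letter) := dfunctor (Lin w) C.

Record presheaf (C : dcat) := PSh {
  pobj :> Ob C -> Type;
  pmap : forall U V, @Hom C U V -> pobj V -> pobj U;
  pmap_id : forall U x, pmap _ _ (idm U) x = x;
  pmap_comp : forall U V W (f : @Hom C U V) (g : @Hom C V W) x,
      pmap _ _ (comp g f) x = pmap _ _ f (pmap _ _ g x)
}.
Arguments pobj {C} _ _.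
Arguments pmap {C} _ {U V} _ _.

Definition natural {C : dcat} (P Q : presheaf C) (eta : forall U, P U -> Q U) :=
  forall U V (f : @Hom C U V) (x : P V), eta U (pmap P f x) = pmap Q f (eta V x).

Definition repr (C : dcat) (c : Ob C) : presheaf C.
Proof.
  refine (@PSh C (fun U => @Hom C U c) (fun U V f h => comp h f) _ _).
  - intros; apply comp_idr.
  - intros; apply comp_assoc.
Defined.

Record automaton (C : dcat) := Aut {
  aps :> presheaf C;
  start : forall U, aps U -> Prop;
  accept : forall U, aps U -> Prop
}.
Arguments aps {C} _.
Arguments start {C} _ _ _.
Arguments accept {C} _ _ _.

Definition aut_morphism {C : dcat} (X Y : automaton C) (eta : forall U, X U -> Y U) :=
  natural X Y eta /\
  (forall U x, start X U x -> start Y U (eta U x)) /\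
  (forall U x, accept X U x -> accept Y U (eta U x)).

Definition cocone {C : dcat} {w} (om : path C w) (P : presheaf C)
    (lam : forall i : Ob (Lin w), forall U, @Hom C U (fob om i) -> P U) :=
  (forall i, natural (repr C (fob om i)) P (lam i)) /\
  (forall i j (g : @Hom (Lin w) i j) U (h : @Hom C U (fob om i)),
      lam j U (comp (fhom om g) h) = lam i U h).

Definition is_colimit {C : dcat} {w} (om : path C w) (G : presheaf C)
    (lam : forall i : Ob (Lin w), forall U, @Hom C U (fob om i) -> G U) :=
  forall (P : presheaf C) mu, cocone om P mu ->
    exists eta : forall U, G U -> P U,
      natural G P eta /\ (forall i U h, eta U (lam i U h) = mu i U h) /\
      (forall eta' : forall U, G U -> P U, natural G P eta' ->
         (forall i U h, eta' U (lam i U h) = mu i U h) ->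
         forall U x, eta' U x = eta U x).

(* Gamma is a track object: (isomorphic to) the track object of some path,
   i.e. a colimit of C(-, omega(i)) whose unique start element is the image of
   id_{omega(bot)} and whose unique accept element is the image of id_{omega(top)}. *)
Definition track_object {C : dcat} (G : automaton C) : Prop :=
  exists w (om : path C w) lam,
    cocone om G lam /\ is_colimit om G lam /\
    (forall U (x : G U), start G U x <->
        existT (fun V => G V) U x =
        existT (fun V => G V) (fob om (lbot w)) (lam (lbot w) _ (idm _))) /\
    (forall U (x : G U), accept G U x <->
        existT (fun V => G V) U x =
        existT (fun V => G V) (fob om (ltop w)) (lam (ltop w) _ (idm _))).

Definition track_le {C : dcat} (D G : automaton C) : Prop :=
  exists eta, aut_morphism D G eta.

Definition is_language {C : dcat} (L : automaton C -> Prop) : Prop :=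
  (forall G, L G -> track_object G) /\
  (forall G D, L G -> track_object D -> track_le D G -> L D).

Definition Lang {C : dcat} (X : automaton C) : automaton C -> Prop :=
  fun G => track_object G /\ exists eta, aut_morphism G X eta.

(* Main.v *)
Require Import Defs.
From Stdlib Require Import ProofIrrelevance Lia List Arith ClassicalEpsilon PropExtensionality FunctionalExtensionality.

Definition good (C : dcat) (L : automaton C -> Prop) (w : list letter) (om : path C w) : Prop :=
  exists (G : automaton C) lam, L G /\ cocone om G lam /\ is_colimit om G lam /\
    (forall U (x : G U), start G U x <->
        existT (fun V => G V) U x =
        existT (fun V => G V) (fob om (lbot w)) (lam (lbot w) _ (idm _))) /\
    (forall U (x : G U), accept G U x <->
        existT (fun V => G V) U x =
        existT (fun V => G V) (fob om (ltop w)) (lam (ltop w) _ (idm _))).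

Definition Idx (C : dcat) (L : automaton C -> Prop) :=
  {w : list letter & {om : path C w | good C L w om}}.
Definition iw {C L} (p : Idx C L) : list letter := projT1 p.
Definition iom {C L} (p : Idx C L) : path C (iw p) := proj1_sig (projT2 p).

Definition T (C : dcat) (L : automaton C -> Prop) (U : Ob C) :=
  {p : Idx C L & {k : Ob (Lin (iw p)) & @Hom C U (fob (iom p) k)}}.

Definition mkT {C L U} (p : Idx C L) (k : Ob (Lin (iw p))) (h : @Hom C U (fob (iom p) k)) : T C L U :=
  existT (fun p => {k : Ob (Lin (iw p)) & @Hom C U (fob (iom p) k)}) p
    (existT (fun k => @Hom C U (fob (iom p) k)) k h).

Inductive step {C : dcat} {L : automaton C -> Prop} {U : Ob C} : T C L U -> T C L U -> Prop :=
 | step_i : forall p (i j : Ob (Lin (iw p))) (g : @Hom (Lin (iw p)) i j) (h : @Hom C U (fob (iom p) i)),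
     step (mkT p j (comp (fhom (iom p) g) h)) (mkT p i h).

Inductive eqc {C : dcat} {L : automaton C -> Prop} {U : Ob C} : T C L U -> T C L U -> Prop :=
 | eqc_step : forall s t, step s t -> eqc s t
 | eqc_refl : forall s, eqc s s
 | eqc_sym : forall s t, eqc s t -> eqc t s
 | eqc_trans : forall s t u, eqc s t -> eqc t u -> eqc s u.

Definition restrict {C L U V} (t : T C L U) (f : @Hom C V U) : T C L V :=
  mkT (projT1 t) (projT1 (projT2 t)) (comp (projT2 (projT2 t)) f).

Lemma step_restrict {C L U V} (s t : T C L U) (f : @Hom C V U) :
  step s t -> step (restrict s f) (restrict t f).
Proof.
  destruct 1 as [p i j g h]. unfold restrict, mkT; simpl.
  rewrite <- comp_assoc. apply (step_i p i j g (comp h f)).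
Qed.

Lemma eqc_restrict {C L U V} (s t : T C L U) (f : @Hom C V U) :
  eqc s t -> eqc (restrict s f) (restrict t f).
Proof.
  induction 1.
  - apply eqc_step, step_restrict; auto.
  - apply eqc_refl.
  - apply eqc_sym; auto.
  - eapply eqc_trans; eauto.
Qed.

Lemma restrict_id {C L U} (t : T C L U) : restrict t (idm U) = t.
Proof. destruct t as [p [k a]]; unfold restrict, mkT; simpl; rewrite comp_idr; reflexivity. Qed.

Lemma restrict_comp {C L U V W} (t : T C L W) (g : @Hom C V W) (f : @Hom C U V) :
  restrict (restrict t g) f = restrict t (comp g f).
Proof. destruct t as [p [k a]]; unfold restrict, mkT; simpl; rewrite comp_assoc; reflexivity. Qed.

Definition Q C L U := {P : T C L U -> Prop | exists t, P = eqc t}.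
Definition cls {C L U} (t : T C L U) : Q C L U := exist _ (eqc t) (ex_intro _ t eq_refl).
Definition rep {C L U} (x : Q C L U) : T C L U :=
  proj1_sig (constructive_indefinite_description _ (proj2_sig x)).

Lemma rep_spec {C L U} (x : Q C L U) : proj1_sig x = eqc (rep x).
Proof.
  unfold rep. destruct (constructive_indefinite_description _ (proj2_sig x)) as [t Ht]; exact Ht.
Qed.

Lemma cls_rep {C L U} (x : Q C L U) : cls (rep x) = x.
Proof.
  pose proof (rep_spec x) as H. destruct x as [P HP]. unfold cls. simpl in H.
  apply subset_eq_compat. symmetry; exact H.
Qed.

Lemma cls_eq {C L U} (s t : T C L U) : eqc s t -> cls s = cls t.
Proof.
  intro H. unfold cls. apply subset_eq_compat. extensionality u.
  apply propositional_extensionality; split; intro K.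
  - eapply eqc_trans; [apply eqc_sym, H| exact K].
  - eapply eqc_trans; [exact H| exact K].
Qed.

Lemma rep_cls {C L U} (t : T C L U) : eqc t (rep (cls t)).
Proof.
  pose proof (rep_spec (cls t)) as H. simpl in H.
  pose proof (f_equal (fun P => P (rep (cls t))) H) as H2. simpl in H2.
  rewrite H2. apply eqc_refl.
Qed.

Definition pmapQ {C L U V} (f : @Hom C U V) (x : Q C L V) : Q C L U :=
  cls (restrict (rep x) f).

Lemma pmapQ_id {C L} U (x : Q C L U) : pmapQ (idm U) x = x.
Proof. unfold pmapQ. rewrite restrict_id. apply cls_rep. Qed.

Lemma pmapQ_comp {C L} U V W (f : @Hom C U V) (g : @Hom C V W) (x : Q C L W) :
  pmapQ (comp g f) x = pmapQ f (pmapQ g x).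
Proof.
  unfold pmapQ. apply cls_eq. rewrite <- restrict_comp. apply eqc_restrict. apply rep_cls.
Qed.

Definition XP (C : dcat) (L : automaton C -> Prop) : presheaf C :=
  @PSh C (Q C L) (fun U V f x => pmapQ f x) (@pmapQ_id C L) (@pmapQ_comp C L).

Definition XA (C : dcat) (L : automaton C -> Prop) : automaton C :=
  @Aut C (XP C L)
    (fun U x => exists p : Idx C L,
       existT (fun V => Q C L V) U x =
       existT (fun V => Q C L V) (fob (iom p) (lbot (iw p))) (cls (mkT p (lbot (iw p)) (idm _))))
    (fun U x => exists p : Idx C L,
       existT (fun V => Q C L V) U x =
       existT (fun V => Q C L V) (fob (iom p) (ltop (iw p))) (cls (mkT p (ltop (iw p)) (idm _)))).

Lemma transp {A} {P : A -> Type} (Qp : forall a, P a -> Prop) a b (x : P a) (y : P b) :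
  existT P a x = existT P b y -> Qp b y -> Qp a x.
Proof.
  intros H Hq. exact (match eq_sym H in _ = s return Qp (projT1 s) (projT2 s) with eq_refl => Hq end).
Qed.

Lemma eqc_p {C L U} (s t : T C L U) : eqc s t -> projT1 s = projT1 t.
Proof. induction 1; try congruence. destruct H; reflexivity. Qed.

Definition Val {C L} (p : Idx C L) (G0 : presheaf C)
  (lam0 : forall i : Ob (Lin (iw p)), forall U, @Hom C U (fob (iom p) i) -> G0 U)
  {U} (t : T C L U) (y : G0 U) : Prop :=
  exists k a, t = mkT p k a /\ y = lam0 k U a.

Lemma Val_step {C L} (p : Idx C L) (G0 : presheaf C) lam0 (Hc : cocone (iom p) G0 lam0)
  U (s t : T C L U) y : step s t -> (Val p G0 lam0 s y <-> Val p G0 lam0 t y).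
Proof.
  destruct 1 as [q i j g h]. unfold Val, mkT. split; intros (k & a & E & Ey).
  - assert (q = p) by exact (f_equal (@projT1 _ _) E). subst q.
    apply inj_pair2 in E.
    assert (j = k) by exact (f_equal (@projT1 _ _) E). subst k.
    apply inj_pair2 in E. subst a.
    exists i, h. split; auto. rewrite Ey. apply (proj2 Hc).
  - assert (q = p) by exact (f_equal (@projT1 _ _) E). subst q.
    apply inj_pair2 in E.
    assert (i = k) by exact (f_equal (@projT1 _ _) E). subst k.
    apply inj_pair2 in E. subst a.
    exists j, (comp (fhom (iom p) g) h). split; auto. rewrite Ey. symmetry; apply (proj2 Hc).
Qed.

Lemma Val_eqc {C L} (p : Idx C L) (G0 : presheaf C) lam0 (Hc : cocone (iom p) G0 lam0)
  U (s t : T C L U) : eqc s t -> forall y, (Val p G0 lam0 s y <-> Val p G0 lam0 t y).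
Proof.
  induction 1; intro y.
  - apply Val_step; auto.
  - tauto.
  - rewrite IHeqc; tauto.
  - rewrite IHeqc1, IHeqc2; tauto.
Qed.

Lemma Val_fun {C L} (p : Idx C L) (G0 : presheaf C) lam0 U (t : T C L U) y y' :
  Val p G0 lam0 t y -> Val p G0 lam0 t y' -> y = y'.
Proof.
  intros (k & a & E & Ey) (k' & a' & E' & Ey'). rewrite E in E'. unfold mkT in E'.
  apply inj_pair2 in E'.
  assert (k = k') by exact (f_equal (@projT1 _ _) E'). subst k'.
  apply inj_pair2 in E'. subst; reflexivity.
Qed.

Lemma Val_restrict {C L} (p : Idx C L) (G0 : presheaf C) lam0 (Hc : cocone (iom p) G0 lam0)
  U V (t : T C L U) (f : @Hom C V U) y :
  Val p G0 lam0 t y -> Val p G0 lam0 (restrict t f) (pmap G0 f y).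
Proof.
  intros (k & a & E & Ey). subst t y. unfold restrict, mkT; simpl.
  exists k, (comp a f). split; auto.
  symmetry. exact ((proj1 Hc) k V U f a).
Qed.

Lemma Val_ex {C L} (p : Idx C L) (G0 : presheaf C) lam0 U (t : T C L U) :
  projT1 t = p -> exists y, Val p G0 lam0 t y.
Proof.
  destruct t as [q [k a]]; simpl; intro; subst q. exists (lam0 k _ a), k, a; auto.
Qed.

Lemma lin_const {B : Type} (w : list letter) (F : Ob (Lin w) -> B) :
  (forall i j (g : @Hom (Lin w) i j), F i = F j) -> forall i, F i = F (lbot w).
Proof.
  intros HF [n H]. induction n as [|n IH].
  - f_equal. unfold lbot. f_equal. apply proof_irrelevance.
  - assert (Hn : n <= length w) by lia. rewrite <- (IH Hn).
    destruct (nth n w LI) eqn:E.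
    + symmetry. apply HF. simpl. intro k; simpl; split; intro; [|lia].
      assert (k = n) by lia; subst; rewrite E; exact I.
    + apply HF. simpl. intro k; simpl; split; intro; [lia|].
      assert (k = n) by lia; subst; rewrite E; exact I.
    + symmetry. apply HF. simpl. intro k; simpl; split; intro; [|lia].
      assert (k = n) by lia; subst; rewrite E; exact I.
Qed.

Lemma part2 (C : dcat) (X : automaton C) : is_language (Lang X).
Proof.
  split.
  - intros G [HG _]; exact HG.
  - intros G D [HG [eta [n1 [s1 a1]]]] HD [e1 [n2 [s2 a2]]].
    split; [exact HD|]. exists (fun U x => eta U (e1 U x)).
    split; [|split].
    + intros U V f x. rewrite n2, n1; reflexivity.
    + intros; apply s1, s2; auto.
    + intros; apply a1, a2; auto.
Qed.

Lemma dir_back (C : dcat) (L : automaton C -> Prop) (HL : is_language L) G :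
  L G -> Lang (XA C L) G.
Proof.
  intro HG. pose proof (proj1 HL G HG) as HT.
  destruct HT as (w & om & lam & Hco & Hcol & Hst & Hac) eqn:EHT.
  assert (Hg : good C L w om) by (exists G, lam; tauto).
  pose (p := existT (fun w => {om : path C w | good C L w om}) w (exist _ om Hg) : Idx C L).
  pose (mu := fun (i : Ob (Lin w)) U (h : @Hom C U (fob om i)) => (cls (mkT p i h) : Q C L U)).
  assert (Hc : cocone om (XP C L) mu).
  { split.
    - intros i U V f h. simpl. unfold mu, pmapQ. symmetry. apply cls_eq.
      eapply eqc_trans; [apply eqc_restrict, eqc_sym, rep_cls|]. apply eqc_refl.
    - intros i j g U h. unfold mu. apply cls_eq, eqc_step, (step_i p i j g h). }
  destruct (Hcol (XP C L) mu Hc) as (eta & Hn & Hf & _).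
  split; [exact HT|]. exists eta. split; [exact Hn|split].
  - intros U x Hs. apply Hst in Hs.
    apply (transp (fun V z => start (XA C L) V (eta V z)) _ _ _ _ Hs).
    rewrite Hf. exists p. reflexivity.
  - intros U x Hs. apply Hac in Hs.
    apply (transp (fun V z => accept (XA C L) V (eta V z)) _ _ _ _ Hs).
    rewrite Hf. exists p. reflexivity.
Qed.

Lemma dir_fwd (C : dcat) (L : automaton C -> Prop) (HL : is_language L) G :
  Lang (XA C L) G -> L G.
Proof.
  intros [HT [eta [Hn [Hs Ha]]]].
  pose proof HT as HT'.
  destruct HT' as (w & om & lam & Hco & Hcol & Hst & Hac).
  pose (x := fun i : Ob (Lin w) => eta (fob om i) (lam i _ (idm _)) : Q C L (fob om i)).
  assert (Hxg : forall i j (g : @Hom (Lin w) i j), x i = pmapQ (fhom om g) (x j)).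
  { intros i j g. unfold x.
    transitivity (eta _ (pmap G (fhom om g) (lam j _ (idm _)))).
    - f_equal. rewrite <- (proj1 Hco j _ _ (fhom om g) (idm _)). simpl.
      rewrite comp_idl. rewrite <- (comp_idr _ _ _ (fhom om g)).
      symmetry. apply (proj2 Hco).
    - apply Hn. }
  assert (Hpath0 : forall i, projT1 (rep (x i)) = projT1 (rep (x (lbot w)))).
  { apply (lin_const w (fun i => projT1 (rep (x i)))).
    intros i j g. rewrite (Hxg i j g). unfold pmapQ.
    rewrite <- (eqc_p _ _ (rep_cls _)). reflexivity. }
  set (p := projT1 (rep (x (lbot w)))) in Hpath0. clearbody p.
  destruct (proj2_sig (projT2 p)) as (G0 & lam0 & HL0 & Hco0 & Hcol0 & Hst0 & Hac0).
  assert (Hy : forall i, {y : G0 (fob om i) | Val p G0 lam0 (rep (x i)) y}).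
  { intro i. apply constructive_indefinite_description, Val_ex, Hpath0. }
  pose (mu := fun (i : Ob (Lin w)) U (h : @Hom C U (fob om i)) =>
                pmap G0 h (proj1_sig (Hy i))).
  assert (Hc : cocone om G0 mu).
  { split.
    - intros i U V f h. unfold mu. simpl. apply pmap_comp.
    - intros i j g U h. unfold mu. rewrite pmap_comp. f_equal.
      destruct (Hy i) as [yi Hi], (Hy j) as [yj Hj]; simpl.
      apply (Val_fun p G0 lam0 _ (rep (x i))); [|exact Hi].
      rewrite (Hxg i j g). unfold pmapQ.
      apply (proj1 (Val_eqc p G0 lam0 Hco0 _ _ _ (rep_cls _) _)).
      apply Val_restrict; auto. }
  destruct (Hcol G0 mu Hc) as (eta2 & Hn2 & Hf2 & _).
  apply (proj2 HL G0 G HL0 HT). exists eta2. split; [exact Hn2|split].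
  - intros U z Hz. apply Hst in Hz.
    apply (transp (fun V z => start G0 V (eta2 V z)) _ _ _ _ Hz).
    rewrite Hf2. unfold mu. rewrite pmap_id.
    assert (Hsx : start (XA C L) _ (x (lbot w))) by (apply Hs, Hst; reflexivity).
    destruct (Hy (lbot w)) as [yb Hb]; simpl.
    destruct Hsx as [q Eq].
    revert yb Hb.
    apply (transp (fun V z => forall y : G0 V, Val p G0 lam0 (rep z) y -> start G0 V y) _ _ _ _ Eq).
    intros y Hv.
    apply (proj2 (Val_eqc p G0 lam0 Hco0 _ _ _ (rep_cls _) _)) in Hv.
    destruct Hv as (k & a & E & Ey). unfold mkT in E.
    assert (q = p) by exact (f_equal (@projT1 _ _) E). subst q.
    apply inj_pair2 in E.
    assert (lbot (iw p) = k) by exact (f_equal (@projT1 _ _) E). subst k.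
    apply inj_pair2 in E. subst a y.
    apply Hst0. reflexivity.
  - intros U z Hz. apply Hac in Hz.
    apply (transp (fun V z => accept G0 V (eta2 V z)) _ _ _ _ Hz).
    rewrite Hf2. unfold mu. rewrite pmap_id.
    assert (Hsx : accept (XA C L) _ (x (ltop w))) by (apply Ha, Hac; reflexivity).
    destruct (Hy (ltop w)) as [yb Hb]; simpl.
    destruct Hsx as [q Eq].
    revert yb Hb.
    apply (transp (fun V z => forall y : G0 V, Val p G0 lam0 (rep z) y -> accept G0 V y) _ _ _ _ Eq).
    intros y Hv.
    apply (proj2 (Val_eqc p G0 lam0 Hco0 _ _ _ (rep_cls _) _)) in Hv.
    destruct Hv as (k & a & E & Ey). unfold mkT in E.
    assert (q = p) by exact (f_equal (@projT1 _ _) E). subst q.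
    apply inj_pair2 in E.
    assert (ltop (iw p) = k) by exact (f_equal (@projT1 _ _) E). subst k.
    apply inj_pair2 in E. subst a y.
    apply Hac0. reflexivity.
Qed.

Theorem lemma9 (C : dcat) :
  (forall L : automaton C -> Prop, is_language L ->
     exists X : automaton C, forall G : automaton C, Lang X G <-> L G) /\
  (forall X : automaton C, is_language (Lang X)).
Proof.
  split.
  - intros L HL. exists (XA C L). intro G. split; [apply dir_fwd | apply dir_back]; auto.
  - apply part2.
Qed.
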